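(* Let $G$ be a nonabelian group, let $\psi\in\operatorname{End}(G)$ satisfy $\psi([G,G])\le Z(G)$, and let $\alpha\in\mathscr{E}$. Writing $\psi_\alpha=\psi\circ\alpha$, define a binary operation on $G$ by $g\circ_\alpha h=g\,\psi_\alpha(g)\,h\,\psi_\alpha(g)^{-1}$. Then $(G,\circ_\alpha)$ is a group.
   Context: $Z(G)$ is the center and $[G,G]$ the commutator subgroup of $G$. $\mathscr{E}$ denotes the set of formal expressions $\alpha=n_1\phi_1+\cdots+n_t\phi_t$ with $t\ge0$, $n_i\in\mathbb Z$, $\phi_i\in\operatorname{End}(G)$ (the free group on $\operatorname{End}(G)$, written additively), acting on $G$ by $\alpha(g)=\phi_1(g^{n_1})\phi_2(g^{n_2})\cdots\phi_t(g^{n_t})$. *)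

(* Defs.v *)
From Stdlib Require Import ZArith List.
Set Implicit Arguments.

Section Grp.
Variable T : Type.

Definition group_laws (mul : T -> T -> T) (one : T) (inv : T -> T) : Prop :=
  (forall x y z, mul x (mul y z) = mul (mul x y) z) /\
  (forall x, mul one x = x /\ mul x one = x) /\
  (forall x, mul x (inv x) = one /\ mul (inv x) x = one).

Variables (mul : T -> T -> T) (one : T) (inv : T -> T).

Definition is_group_op (op : T -> T -> T) : Prop :=
  exists e i, group_laws op e i.

Definition nonabelian : Prop := exists x y, mul x y <> mul y x.

Definition is_endo (phi : T -> T) : Prop :=
  forall x y, phi (mul x y) = mul (phi x) (phi y).

Fixpoint npow (g : T) (n : nat) : T :=
  match n with O => one | S k => mul g (npow g k) end.

Definition zpow (g : T) (n : Z) : T :=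
  match n with
  | Z0 => one
  | Zpos p => npow g (Pos.to_nat p)
  | Zneg p => inv (npow g (Pos.to_nat p))
  end.

Definition comm (x y : T) : T := mul (mul (inv x) (inv y)) (mul x y).

Inductive in_derived : T -> Prop :=
  | der_one : in_derived one
  | der_comm : forall x y, in_derived (comm x y)
  | der_mul : forall a b, in_derived a -> in_derived b -> in_derived (mul a b)
  | der_inv : forall a, in_derived a -> in_derived (inv a).

Definition in_center (z : T) : Prop := forall x, mul z x = mul x z.

(* An element alpha = n_1 phi_1 + ... + n_t phi_t of the free group on End(G),
   represented by a formal word (list of pairs (n_i, phi_i)); its action is
   alpha(g) = phi_1(g^{n_1}) ... phi_t(g^{n_t}). *)
Definition word_endos (alpha : list (Z * (T -> T))) : Prop :=
  forall p, In p alpha -> is_endo (snd p).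

Fixpoint act (alpha : list (Z * (T -> T))) (g : T) : T :=
  match alpha with
  | nil => one
  | (n, phi) :: rest => mul (phi (zpow g n)) (act rest g)
  end.

Definition circ (psi : T -> T) (alpha : list (Z * (T -> T))) (g h : T) : T :=
  let a := psi (act alpha g) in mul (mul (mul g a) h) (inv a).

End Grp.

(* Main.v *)
Require Import Defs.
From Stdlib Require Import ZArith List.
Set Implicit Arguments.

Lemma gA T mul (one:T) inv (HG : group_laws mul one inv) x y z :
  mul x (mul y z) = mul (mul x y) z.
Proof. destruct HG as [H _]; apply H. Qed.
Lemma g1l T mul (one:T) inv (HG : group_laws mul one inv) x : mul one x = x.
Proof. destruct HG as [_ [H _]]; apply H. Qed.
Lemma g1r T mul (one:T) inv (HG : group_laws mul one inv) x : mul x one = x.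
Proof. destruct HG as [_ [H _]]; apply H. Qed.
Lemma gVr T mul (one:T) inv (HG : group_laws mul one inv) x : mul x (inv x) = one.
Proof. destruct HG as [_ [_ H]]; apply H. Qed.
Lemma gVl T mul (one:T) inv (HG : group_laws mul one inv) x : mul (inv x) x = one.
Proof. destruct HG as [_ [_ H]]; apply H. Qed.
Lemma gKl T mul (one:T) inv (HG : group_laws mul one inv) x y : mul (inv x) (mul x y) = y.
Proof. rewrite (gA HG), (gVl HG), (g1l HG); auto. Qed.
Lemma gKr T mul (one:T) inv (HG : group_laws mul one inv) x y : mul x (mul (inv x) y) = y.
Proof. rewrite (gA HG), (gVr HG), (g1l HG); auto. Qed.
Lemma gcanl T mul (one:T) inv (HG : group_laws mul one inv) a x y :
  mul a x = mul a y -> x = y.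
Proof. intro H. rewrite <- (gKl HG a x), H, (gKl HG); auto. Qed.
Lemma ginv_uniq T mul (one:T) inv (HG : group_laws mul one inv) x y :
  mul x y = one -> y = inv x.
Proof. intro H. apply (gcanl HG x). rewrite H, (gVr HG); auto. Qed.
Lemma ginvK T mul (one:T) inv (HG : group_laws mul one inv) x : inv (inv x) = x.
Proof. symmetry. apply (ginv_uniq HG). apply (gVl HG). Qed.
Lemma ginvM T mul (one:T) inv (HG : group_laws mul one inv) x y :
  inv (mul x y) = mul (inv y) (inv x).
Proof. symmetry. apply (ginv_uniq HG).
  rewrite <- (gA HG), (gA HG y), (gVr HG), (g1l HG), (gVr HG); auto. Qed.
Lemma ginv1 T mul (one:T) inv (HG : group_laws mul one inv) : inv one = one.
Proof. symmetry. apply (ginv_uniq HG). apply (g1l HG). Qed.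

Ltac gnorm HG := repeat rewrite <- (gA HG).

Definition eqv T mul (one:T) inv x y := in_derived mul one inv (mul (inv x) y).

Lemma D_conj T mul (one:T) inv (HG : group_laws mul one inv) x d :
  in_derived mul one inv d -> in_derived mul one inv (mul (mul x d) (inv x)).
Proof.
  intro Hd. replace (mul (mul x d) (inv x)) with (mul d (comm mul inv d (inv x))).
  - apply der_mul; auto. apply der_comm.
  - unfold comm. rewrite (ginvK HG). gnorm HG. rewrite (gKr HG). auto.
Qed.

Lemma eqv_refl T mul (one:T) inv (HG : group_laws mul one inv) x : eqv mul one inv x x.
Proof. unfold eqv. rewrite (gVl HG). apply der_one. Qed.
Lemma eqv_eq T mul (one:T) inv (HG : group_laws mul one inv) x y : x = y -> eqv mul one inv x y.
Proof. intros ->; apply (eqv_refl HG). Qed.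
Lemma eqv_sym T mul (one:T) inv (HG : group_laws mul one inv) x y :
  eqv mul one inv x y -> eqv mul one inv y x.
Proof. unfold eqv. intro H. apply der_inv in H. rewrite (ginvM HG), (ginvK HG) in H; auto. Qed.
Lemma eqv_trans T mul (one:T) inv (HG : group_laws mul one inv) x y z :
  eqv mul one inv x y -> eqv mul one inv y z -> eqv mul one inv x z.
Proof. unfold eqv. intros H1 H2. pose proof (der_mul H1 H2) as H.
  repeat rewrite <- (gA HG) in H. rewrite (gKr HG) in H; auto. Qed.
Lemma eqv_mul T mul (one:T) inv (HG : group_laws mul one inv) x x' y y' :
  eqv mul one inv x x' -> eqv mul one inv y y' -> eqv mul one inv (mul x y) (mul x' y').
Proof. unfold eqv. intros H1 H2.
  pose proof (der_mul (D_conj HG (inv y) H1) H2) as H.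
  rewrite (ginvK HG) in H. rewrite (ginvM HG). gnorm HG.
  repeat rewrite <- (gA HG) in H. rewrite (gKr HG) in H. auto. Qed.
Lemma eqv_comm T mul (one:T) inv (HG : group_laws mul one inv) x y :
  eqv mul one inv (mul x y) (mul y x).
Proof. unfold eqv. rewrite (ginvM HG). pose proof (der_comm mul one inv y x) as H.
  unfold comm in H. gnorm HG. repeat rewrite <- (gA HG) in H. auto. Qed.
Lemma eqv_inv T mul (one:T) inv (HG : group_laws mul one inv) x y :
  eqv mul one inv x y -> eqv mul one inv (inv x) (inv y).
Proof. unfold eqv. intros H. apply der_inv in H. apply (D_conj HG x) in H.
  rewrite (ginvM HG), (ginvK HG) in H. rewrite (ginvK HG). gnorm HG.
  repeat rewrite <- (gA HG) in H. rewrite (gVr HG), (g1r HG) in H. auto. Qed.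
Lemma eqv_swap4 T mul (one:T) inv (HG : group_laws mul one inv) a b c d :
  eqv mul one inv (mul (mul a b) (mul c d)) (mul (mul a c) (mul b d)).
Proof.
  apply (eqv_trans HG) with (mul a (mul (mul b c) d)).
  - apply (eqv_eq HG). gnorm HG. auto.
  - apply (eqv_trans HG) with (mul a (mul (mul c b) d)).
    + apply (eqv_mul HG). apply (eqv_refl HG). apply (eqv_mul HG).
      apply (eqv_comm HG). apply (eqv_refl HG).
    + apply (eqv_eq HG). gnorm HG. auto.
Qed.

Lemma npow_mul T mul (one:T) inv (HG : group_laws mul one inv) x y n :
  eqv mul one inv (npow mul one (mul x y) n) (mul (npow mul one x n) (npow mul one y n)).
Proof.
  induction n; simpl.
  - apply (eqv_eq HG). rewrite (g1l HG). auto.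
  - apply (eqv_trans HG) with (mul (mul x y) (mul (npow mul one x n) (npow mul one y n))).
    + apply (eqv_mul HG). apply (eqv_refl HG). auto.
    + apply (eqv_swap4 HG).
Qed.

Lemma zpow_mul T mul (one:T) inv (HG : group_laws mul one inv) x y n :
  eqv mul one inv (zpow mul one inv (mul x y) n) (mul (zpow mul one inv x n) (zpow mul one inv y n)).
Proof.
  destruct n; simpl.
  - apply (eqv_eq HG). rewrite (g1l HG). auto.
  - apply (npow_mul HG).
  - apply (eqv_trans HG) with (inv (mul (npow mul one x (Pos.to_nat p)) (npow mul one y (Pos.to_nat p)))).
    + apply (eqv_inv HG). apply (npow_mul HG).
    + rewrite (ginvM HG). apply (eqv_comm HG).
Qed.

Lemma npow_D T mul (one:T) inv (HG : group_laws mul one inv) d n :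
  in_derived mul one inv d -> in_derived mul one inv (npow mul one d n).
Proof. intro H; induction n; simpl; [apply der_one | apply der_mul; auto]. Qed.
Lemma zpow_D T mul (one:T) inv (HG : group_laws mul one inv) d n :
  in_derived mul one inv d -> in_derived mul one inv (zpow mul one inv d n).
Proof. intro H; destruct n; simpl; [apply der_one | apply (npow_D HG); auto|].
  apply der_inv; apply (npow_D HG); auto. Qed.
Lemma npow_one T mul (one:T) inv (HG : group_laws mul one inv) n : npow mul one one n = one.
Proof. induction n; simpl; auto. rewrite IHn; apply (g1l HG). Qed.
Lemma zpow_one T mul (one:T) inv (HG : group_laws mul one inv) n : zpow mul one inv one n = one.
Proof. destruct n; simpl; rewrite ?(npow_one HG); auto. apply (ginv1 HG). Qed.

Lemma endo_one T mul (one:T) inv (HG : group_laws mul one inv) phi :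
  is_endo mul phi -> phi one = one.
Proof. intro H. apply (gcanl HG (phi one)). rewrite <- H, !(g1r HG). auto. Qed.
Lemma endo_inv T mul (one:T) inv (HG : group_laws mul one inv) phi x :
  is_endo mul phi -> phi (inv x) = inv (phi x).
Proof. intro H. apply (ginv_uniq HG). rewrite <- H, (gVr HG). apply (endo_one HG); auto. Qed.
Lemma endo_D T mul (one:T) inv (HG : group_laws mul one inv) phi d :
  is_endo mul phi -> in_derived mul one inv d -> in_derived mul one inv (phi d).
Proof. intros He H. induction H.
  - rewrite (endo_one HG); auto. apply der_one.
  - replace (phi (comm mul inv x y)) with (comm mul inv (phi x) (phi y));
      [apply der_comm | unfold comm; rewrite !He, !(endo_inv HG _ He); auto].
  - rewrite He. apply der_mul; auto.
  - rewrite (endo_inv HG); auto. apply der_inv; auto.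
Qed.
Lemma endo_eqv T mul (one:T) inv (HG : group_laws mul one inv) phi x y :
  is_endo mul phi -> eqv mul one inv x y -> eqv mul one inv (phi x) (phi y).
Proof. unfold eqv. intros He H. rewrite <- (endo_inv HG), <- He; auto.
  apply (endo_D HG); auto. Qed.

Lemma act_one T mul (one:T) inv (HG : group_laws mul one inv) alpha :
  word_endos mul alpha -> act mul one inv alpha one = one.
Proof. induction alpha as [|[n phi] rest IH]; intro Hw; simpl; auto.
  rewrite (zpow_one HG), (endo_one HG), IH, (g1l HG); auto.
  - intros p Hp; apply Hw; simpl; auto.
  - apply (Hw (n, phi)); simpl; auto. Qed.

Lemma act_D T mul (one:T) inv (HG : group_laws mul one inv) alpha d :
  word_endos mul alpha -> in_derived mul one inv d -> in_derived mul one inv (act mul one inv alpha d).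
Proof. intros Hw Hd. induction alpha as [|[n phi] rest IH]; simpl; [apply der_one|].
  apply der_mul.
  - apply (endo_D HG). apply (Hw (n, phi)); simpl; auto. apply (zpow_D HG); auto.
  - apply IH. intros p Hp; apply Hw; simpl; auto. Qed.

Lemma act_mul T mul (one:T) inv (HG : group_laws mul one inv) alpha x y :
  word_endos mul alpha ->
  eqv mul one inv (act mul one inv alpha (mul x y)) (mul (act mul one inv alpha x) (act mul one inv alpha y)).
Proof. intros Hw. induction alpha as [|[n phi] rest IH]; simpl.
  - apply (eqv_eq HG). rewrite (g1l HG); auto.
  - assert (Hphi : is_endo mul phi) by (apply (Hw (n, phi)); simpl; auto).
    apply (eqv_trans HG) with (mul (phi (mul (zpow mul one inv x n) (zpow mul one inv y n)))
       (mul (act mul one inv rest x) (act mul one inv rest y))).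
    + apply (eqv_mul HG).
      * apply (endo_eqv HG Hphi). apply (zpow_mul HG).
      * apply IH. intros p Hp; apply Hw; simpl; auto.
    + rewrite Hphi. apply (eqv_swap4 HG).
Qed.

Lemma act_eqv T mul (one:T) inv (HG : group_laws mul one inv) alpha x y :
  word_endos mul alpha -> eqv mul one inv x y ->
  eqv mul one inv (act mul one inv alpha x) (act mul one inv alpha y).
Proof. intros Hw H.
  assert (Hy : y = mul x (mul (inv x) y)) by (rewrite (gKr HG); auto).
  rewrite Hy. eapply (eqv_trans HG); [| apply (eqv_sym HG); apply (act_mul HG); auto].
  unfold eqv. rewrite (gKl HG). apply (act_D HG); auto. Qed.

Lemma psi_eqv T mul (one:T) inv (HG : group_laws mul one inv) psi u v :
  is_endo mul psi -> (forall x, in_derived mul one inv x -> in_center mul (psi x)) ->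
  eqv mul one inv u v -> exists z, in_center mul z /\ psi v = mul (psi u) z.
Proof. intros He Hc H. exists (psi (mul (inv u) v)). split; auto.
  rewrite <- He, (gKr HG). auto. Qed.

Lemma assoc_alg T mul (one:T) inv (HG : group_laws mul one inv) g h k A B C z :
  in_center mul z -> C = mul (mul A B) z ->
  mul (mul (mul (mul (mul (mul g A) h) (inv A)) C) k) (inv C)
  = mul (mul (mul g A) (mul (mul (mul h B) k) (inv B))) (inv A).
Proof. intros Hz ->. rewrite !(ginvM HG). gnorm HG. rewrite (gKl HG).
  rewrite (gA HG z k), (Hz k), <- (gA HG k z), (gKr HG). auto. Qed.

Theorem proposition3p2 (T : Type) (mul : T -> T -> T) (one : T) (inv : T -> T)
  (HG : group_laws mul one inv)
  (Hnab : nonabelian mul)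
  (psi : T -> T) (Hpsi : is_endo mul psi)
  (Hpsi_der : forall x, in_derived mul one inv x -> in_center mul (psi x))
  (alpha : list (Z * (T -> T))) (Halpha : word_endos mul alpha) :
  is_group_op (circ mul one inv psi alpha).
Proof.
  set (f := fun g => psi (act mul one inv alpha g)).
  assert (F1 : f one = one).
  { unfold f. rewrite (act_one HG); auto. apply (endo_one HG); auto. }
  assert (Hc : forall g h, circ mul one inv psi alpha g h = mul (mul (mul g (f g)) h) (inv (f g))).
  { intros; reflexivity. }
  assert (F2 : forall g h, exists z, in_center mul z /\
     f (circ mul one inv psi alpha g h) = mul (mul (f g) (f h)) z).
  { intros g h.
    assert (E : eqv mul one inv (mul (act mul one inv alpha g) (act mul one inv alpha h))
                  (act mul one inv alpha (circ mul one inv psi alpha g h))).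
    { apply (eqv_sym HG). eapply (eqv_trans HG); [| apply (act_mul HG); auto].
      apply (act_eqv HG); auto. rewrite Hc.
      apply (eqv_trans HG) with (mul (mul g (f g)) (mul h (inv (f g)))).
      - apply (eqv_eq HG). gnorm HG. auto.
      - eapply (eqv_trans HG). apply (eqv_swap4 HG).
        apply (eqv_eq HG). rewrite (gVr HG), (g1r HG). auto. }
    destruct (psi_eqv HG Hpsi Hpsi_der E) as [z [Hz Ez]].
    exists z; split; auto. unfold f. rewrite Ez, Hpsi. auto. }
  assert (Hassoc : forall x y z, circ mul one inv psi alpha x (circ mul one inv psi alpha y z)
      = circ mul one inv psi alpha (circ mul one inv psi alpha x y) z).
  { intros x y z. destruct (F2 x y) as [w [Hw E]].
    rewrite (Hc (circ mul one inv psi alpha x y)), !Hc. symmetry.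
    rewrite Hc in E. apply (assoc_alg HG) with (z := w); auto. }
  assert (Hr1 : forall x, circ mul one inv psi alpha x one = x).
  { intro x. rewrite Hc, (g1r HG), <- (gA HG x), (gVr HG (f x)), (g1r HG). auto. }
  set (ig := fun g => mul (mul (inv (f g)) (inv g)) (f g)).
  assert (Hri : forall x, circ mul one inv psi alpha x (ig x) = one).
  { intro x. rewrite Hc. unfold ig. gnorm HG. rewrite !(gKr HG), (gVr HG). auto. }
  exists one, ig. split; [|split].
  - exact Hassoc.
  - intro x. split; auto. rewrite Hc, F1, (g1l HG), (g1l HG), (ginv1 HG), (g1r HG). auto.
  - intro x. split; auto.
    set (y := ig x). set (w := ig y).
    set (c := circ mul one inv psi alpha).
    transitivity (c (c y x) (c y w)).
    { unfold c, w. rewrite (Hri y), Hr1. auto. }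
    unfold c, w. rewrite Hassoc, <- (Hassoc y x y). unfold y at 2. rewrite (Hri x), (Hr1 y). apply Hri.
Qed.
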